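(* Let $\mathcal{Z}\subset\mathbb{R}^d$ be a convex compact set with $\max_{\mathbf{z},\mathbf{z}'\in\mathcal{Z}}\|\mathbf{z}-\mathbf{z}'\|\le D$, let $F:\mathcal{Z}\to\mathbb{R}^d$ be single-valued, monotone and $L$-Lipschitz continuous, and let $\mathbf{w}_*$ be a solution of $\mathrm{SVI}(F,\mathcal{Z})$. For any $\widehat{\mathbf{z}}\in\mathcal{Z}$ (e.g., the output of any algorithm), define $\bar{\mathbf{z}}=\mathrm{Proj}_{\mathcal{Z}}(\widehat{\mathbf{z}}-\eta F(\widehat{\mathbf{z}}))$ with $\eta=1/(\sqrt2L)$. Then $$\max_{\mathbf{z}\in\mathcal{Z}}F(\bar{\mathbf{z}})^\top(\bar{\mathbf{z}}-\mathbf{z})\le DL(2+\sqrt2)\|\widehat{\mathbf{z}}-\mathbf{w}_*\|.$$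
   Context: $\mathrm{Proj}_{\mathcal{Z}}$ is the Euclidean projection onto $\mathcal{Z}$. $F$ is monotone if $\langle F(\mathbf{z})-F(\mathbf{z}'),\mathbf{z}-\mathbf{z}'\rangle\ge0$ for all $\mathbf{z},\mathbf{z}'\in\mathcal{Z}$. $\mathrm{SVI}(F,\mathcal{Z})$ asks for $\mathbf{w}_*\in\mathcal{Z}$ with $\langle F(\mathbf{w}_* ),\mathbf{z}-\mathbf{w}_*\rangle\ge0$ for all $\mathbf{z}\in\mathcal{Z}$. *)

(* Defs.v *)
From HB Require Import structures.
From mathcomp Require Import all_boot all_order all_algebra.
From mathcomp Require Import all_classical all_reals all_analysis.
Set Implicit Arguments. Unset Strict Implicit. Unset Printing Implicit Defensive.
Import Order.TTheory GRing.Theory Num.Theory.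
Import numFieldNormedType.Exports.
Local Open Scope ring_scope.
Local Open Scope classical_set_scope.

Definition vi_dotv {R : realType} {d : nat} (u v : 'rV[R]_d) : R :=
  \sum_(i < d) u ord0 i * v ord0 i.

Definition vi_enorm {R : realType} {d : nat} (u : 'rV[R]_d) : R :=
  Num.sqrt (vi_dotv u u).

Definition vi_convex_set {R : realType} {d : nat} (Z : set 'rV[R]_d) : Prop :=
  forall x y, Z x -> Z y -> forall t : R, 0 <= t <= 1 ->
    Z (t *: x + (1 - t) *: y).

Definition vi_monotone_on {R : realType} {d : nat} (Z : set 'rV[R]_d)
  (F : 'rV[R]_d -> 'rV[R]_d) : Prop :=
  forall z z', Z z -> Z z' -> 0 <= vi_dotv (F z - F z') (z - z').

Definition vi_lipschitz_on {R : realType} {d : nat} (Z : set 'rV[R]_d)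
  (F : 'rV[R]_d -> 'rV[R]_d) (L : R) : Prop :=
  forall z z', Z z -> Z z' -> vi_enorm (F z - F z') <= L * vi_enorm (z - z').

Definition vi_SVI_sol {R : realType} {d : nat} (Z : set 'rV[R]_d)
  (F : 'rV[R]_d -> 'rV[R]_d) (w : 'rV[R]_d) : Prop :=
  Z w /\ forall z, Z z -> 0 <= vi_dotv (F w) (z - w).

(* p is the Euclidean projection of x onto Z (unique for nonempty closed convex Z) *)
Definition vi_is_proj {R : realType} {d : nat} (Z : set 'rV[R]_d)
  (x p : 'rV[R]_d) : Prop :=
  Z p /\ forall z, Z z -> vi_enorm (x - p) <= vi_enorm (x - z).

(* Main.v *)
Require Import Defs.
From HB Require Import structures.
From mathcomp Require Import all_boot all_order all_algebra.
From mathcomp Require Import all_classical all_reals all_analysis.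
From mathcomp Require Import ring lra.
Import Order.TTheory GRing.Theory Num.Theory.
Import numFieldNormedType.Exports.
Local Open Scope ring_scope.
Local Open Scope classical_set_scope.

Section Dot.
Context {R : realType} {d : nat}.
Implicit Types u v w : 'rV[R]_d.

Lemma dotC u v : vi_dotv u v = vi_dotv v u.
Proof. by apply: eq_bigr => i _; rewrite mulrC. Qed.
Lemma dotDl u v w : vi_dotv (u + v) w = vi_dotv u w + vi_dotv v w.
Proof. by rewrite /vi_dotv -big_split; apply: eq_bigr => i _; rewrite mxE mulrDl. Qed.
Lemma dotNl u w : vi_dotv (- u) w = - vi_dotv u w.
Proof. by rewrite /vi_dotv -sumrN; apply: eq_bigr => i _; rewrite mxE mulNr. Qed.
Lemma dotZl k u w : vi_dotv (k *: u) w = k * vi_dotv u w.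
Proof. by rewrite /vi_dotv mulr_sumr; apply: eq_bigr => i _; rewrite mxE mulrA. Qed.
Lemma dotDr u v w : vi_dotv w (u + v) = vi_dotv w u + vi_dotv w v.
Proof. by rewrite dotC dotDl !(dotC w). Qed.
Lemma dotNr u w : vi_dotv w (- u) = - vi_dotv w u.
Proof. by rewrite dotC dotNl dotC. Qed.
Lemma dotZr k u w : vi_dotv w (k *: u) = k * vi_dotv w u.
Proof. by rewrite dotC dotZl dotC. Qed.
Lemma dot_ge0 u : 0 <= vi_dotv u u.
Proof. by apply: sumr_ge0 => i _; rewrite -expr2 sqr_ge0. Qed.
Lemma enorm_ge0 u : 0 <= vi_enorm u.
Proof. exact: sqrtr_ge0. Qed.
Lemma enorm_sq u : vi_enorm u * vi_enorm u = vi_dotv u u.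
Proof. by rewrite -expr2 sqr_sqrtr // dot_ge0. Qed.

Lemma dot0 u v : vi_dotv u u = 0 -> vi_dotv u v = 0.
Proof.
move=> /eqP; rewrite /vi_dotv psumr_eq0; last by move=> i _; rewrite -expr2 sqr_ge0.
move=> /allP H; apply: big1 => i _.
have /H : i \in index_enum 'I_d by rewrite mem_index_enum.
by rewrite /= mulf_eq0 orbb => /eqP ->; rewrite mul0r.
Qed.

Lemma CS u v : vi_dotv u v <= vi_enorm u * vi_enorm v.
Proof.
have hu := enorm_ge0 u; have hv := enorm_ge0 v.
have eu := enorm_sq u; have ev := enorm_sq v.
have [e0|nu] := eqVneq (vi_enorm u) 0.
  by rewrite e0 mul0r dot0 // -eu e0 mul0r.
have [e0|nv] := eqVneq (vi_enorm v) 0.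
  by rewrite e0 mulr0 dotC dot0 // -ev e0 mul0r.
have H := dot_ge0 (vi_enorm v *: u - vi_enorm u *: v).
rewrite !(dotDl, dotDr, dotNl, dotNr, dotZl, dotZr) in H.
have := dotC u v.
have pu : 0 < vi_enorm u by rewrite lt0r nu.
have pv : 0 < vi_enorm v by rewrite lt0r nv.
have puv : 0 < vi_enorm u * vi_enorm v by exact: mulr_gt0.
move=> C.
rewrite -eu -ev -C in H.
nra.
Qed.
End Dot.

Lemma dot_sub_sc {R : realType} {d : nat} (y q : 'rV[R]_d) t :
  vi_dotv (y - t *: q) (y - t *: q) =
  vi_dotv y y - 2 * t * vi_dotv y q + t * t * vi_dotv q q.
Proof.
rewrite !(dotDl, dotDr, dotNl, dotNr, dotZl, dotZr) (dotC q y); ring.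
Qed.

Lemma proj_vi {R : realType} {d : nat} {Z : set 'rV[R]_d} {x p z : 'rV[R]_d} :
  vi_convex_set Z -> vi_is_proj Z x p -> Z z ->
  vi_dotv (x - p) (z - p) <= 0.
Proof.
move=> cZ [Zp Hp] Zz.
set B := vi_dotv (x - p) (z - p).
set Q := vi_dotv (z - p) (z - p).
have hQ : 0 <= Q by exact: dot_ge0.
rewrite leNgt; apply/negP => hB.
set t := B / (B + Q).
have hBQ : 0 < B + Q by lra.
have ht0 : 0 < t by rewrite divr_gt0.
have ht1 : t <= 1 by rewrite ler_pdivrMr // mul1r; lra.
have Zt : Z (t *: z + (1 - t) *: p) by apply: cZ => //; rewrite (ltW ht0) ht1.
have H := Hp _ Zt.
have E : x - (t *: z + (1 - t) *: p) = (x - p) - t *: (z - p).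
  by apply/rowP => i; rewrite !mxE; ring.
rewrite E /vi_enorm ler_sqrt ?dot_ge0 // dot_sub_sc -/B -/Q in H.
have tB : t * (B + Q) = B by rewrite /t mulfVK // gt_eqF.
nra.
Qed.

Lemma firm_aux {R : realType} {d : nat} (a g u : 'rV[R]_d) :
  vi_dotv u u <= vi_dotv (a - g) u ->
  vi_dotv (a - u) (a - u) <= vi_dotv a a + vi_dotv g g.
Proof.
move=> H; have := dot_ge0 (u + g).
rewrite !(dotDl, dotDr, dotNl, dotNr) (dotC u a) (dotC g u) in H *.
lra.
Qed.

Theorem lemma10 (R : realType) (d : nat) (Z : set 'rV[R]_d)
  (F : 'rV[R]_d -> 'rV[R]_d) (D L : R) (w zhat zbar : 'rV[R]_d) :
  vi_convex_set Z -> compact Z ->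
  (forall z z', Z z -> Z z' -> vi_enorm (z - z') <= D) ->
  0 < L -> vi_monotone_on Z F -> vi_lipschitz_on Z F L ->
  vi_SVI_sol Z F w ->
  Z zhat ->
  vi_is_proj Z (zhat - (1 / (Num.sqrt 2 * L)) *: F zhat) zbar ->
  forall z, Z z ->
    vi_dotv (F zbar) (zbar - z) <= D * L * (2 + Num.sqrt 2) * vi_enorm (zhat - w).
Proof.
move=> cZ _ hD hL _ hLip [Zw hw] Zh hP z Zz.
have Zb := hP.1.
set s := Num.sqrt 2.
have s2 : s * s = 2 by rewrite -expr2 sqr_sqrtr.
have s0 : 0 < s by rewrite sqrtr_gt0.
set eta := 1 / (s * L).
have heta : eta * (s * L) = 1 by rewrite /eta mul1r mulVf // mulf_neq0 // gt_eqF.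
have eta0 : 0 < eta by rewrite /eta divr_gt0 // mulr_gt0.
set a := zhat - w.
set u := zbar - w.
set g := eta *: (F zhat - F w).
have P1 := proj_vi cZ hP Zw.
have E1 : zhat - eta *: F zhat - zbar = (a - g - u) - eta *: F w.
  by apply/rowP => i; rewrite !mxE; ring.
have E2 : w - zbar = - u by rewrite /u opprB.
rewrite E1 E2 dotNr dotDl dotNl dotZl in P1.
have hw' := hw _ Zb; rewrite -/u (dotC (F w)) in hw'.
have Hu : vi_dotv u u <= vi_dotv (a - g) u.
  move: P1 hw'; rewrite (dotDl (a - g)) dotNl (dotC u (F w)) => P1 hw'; nra.
have Hr := firm_aux _ _ _ Hu.
have Er : a - u = zhat - zbar by rewrite /a /u opprB addrA subrK.
rewrite Er in Hr.
have Hg : vi_dotv g g <= (vi_dotv a a) / 2.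
  rewrite /g dotZl dotZr -enorm_sq.
  have l1 := hLip _ _ Zh Zw.
  have n0 := enorm_ge0 (F zhat - F w).
  have n1 := enorm_ge0 a.
  have ea := enorm_sq a.
  set n := vi_enorm (F zhat - F w) in l1 n0 *.
  have h1 : n * n <= (L * vi_enorm a) * (L * vi_enorm a) by apply: ler_pM.
  have h2 : (eta * L) * (eta * L) * 2 = 1.
    rewrite -s2; transitivity ((eta * (s * L)) * (eta * (s * L))); first by ring.
    by rewrite heta mulr1.
  have h3 : eta * (eta * (n * n)) <= (eta * L) * (eta * L) * (vi_enorm a * vi_enorm a).
    have -> : (eta * L) * (eta * L) * (vi_enorm a * vi_enorm a) = eta * (eta * ((L * vi_enorm a) * (L * vi_enorm a))) by ring.
    by apply: ler_wpM2l; [lra|]; apply: ler_wpM2l; [lra|].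
  rewrite -ea; nra.
set na := vi_enorm a.
set nr := vi_enorm (zhat - zbar).
have hna := enorm_ge0 a.
have hnr := enorm_ge0 (zhat - zbar).
have ea := enorm_sq a.
have er := enorm_sq (zhat - zbar).
have Hnr : nr <= s * na.
  rewrite -/na -/nr in ea er hna hnr.
  have q : nr * nr <= (s * na) * (s * na).
    have -> : (s * na) * (s * na) = (s * s) * (na * na) by ring.
    rewrite s2; have := mulr_ge0 hna hna; lra.
  have sn : 0 <= s * na by apply: mulr_ge0; lra.
  rewrite leNgt; apply/negP => h.
  have : (s * na) * (s * na) < nr * nr by apply: ltr_pM.
  lra.
set e := zbar - z.
have P2 := proj_vi cZ hP Zz.
have E3 : zhat - eta *: F zhat - zbar = (zhat - zbar) - eta *: F zhat.
  by apply/rowP => i; rewrite !mxE; ring.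
have E4 : z - zbar = - e by rewrite /e opprB.
rewrite E3 E4 dotNr dotDl dotNl dotZl in P2.
have De : vi_enorm e <= D := hD _ _ Zb Zz.
have he := enorm_ge0 e.
have C1 := CS (zhat - zbar) e.
have C2 := CS (F zbar - F zhat) e.
have l2 := hLip _ _ Zb Zh.
have En : vi_enorm (zbar - zhat) = nr.
  by rewrite /nr -opprB /vi_enorm dotNl dotNr opprK.
rewrite En in l2.
have nF := enorm_ge0 (F zbar - F zhat).
have Eg : vi_dotv (F zbar) e = vi_dotv (F zbar - F zhat) e + vi_dotv (F zhat) e.
  by rewrite dotDl dotNl; ring.
rewrite Eg -/nr in C1 *.
have t1 : vi_dotv (F zbar - F zhat) e <= L * nr * D.
  apply: (le_trans C2).
  apply: ler_pM => //. 
have t2 : vi_dotv (F zhat) e <= s * L * nr * D.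
  have : eta * vi_dotv (F zhat) e <= nr * D.
    apply: (le_trans _ (ler_pM hnr he (lexx _) De)); rewrite -/nr; lra.
  move=> h; have := ler_wpM2l (mulr_ge0 (ltW s0) (ltW hL)) h.
  have -> : s * L * (eta * vi_dotv (F zhat) e) = (eta * (s * L)) * vi_dotv (F zhat) e by ring.
  rewrite heta mul1r; lra.
have hD0 : 0 <= D by apply: le_trans De.
have : (1 + s) * L * D * nr <= (1 + s) * L * D * (s * na).
  apply: ler_wpM2l => //; apply: mulr_ge0; [apply: mulr_ge0|] => //; lra.
have -> : (1 + s) * L * D * (s * na) = L * D * na * (s + s * s) by ring.
rewrite s2 -/na => h.
have -> : D * L * (2 + s) * na = L * D * na * (s + 2) by ring.
lra.
Qed.
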